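(* Fix $k\ge1$. For every $k$-bounded composition $\alpha$, $\chi(\mathbf{S}^{(k)}_\alpha)=s^{(k)}_{\lambda(\alpha)}$.
   Context: Compositions are finite sequences of positive integers (possibly empty $\emptyset$); $k$-bounded means all parts $\le k$; $\lambda(\alpha)$ is the partition obtained by sorting the parts of $\alpha$ decreasingly. $\mathsf{NSym}=\mathbb{Q}\langle H_1,H_2,\dots\rangle$ (noncommuting), $\mathsf{NSym}_{(k)}$ its subalgebra generated by $H_1,\dots,H_k$. $\chi:\mathsf{NSym}\to\mathsf{Sym}$ is the algebra homomorphism with $H_i\mapsto h_i$ (complete homogeneous symmetric function), so $\chi(H_{\alpha_1}\cdots H_{\alpha_m})=h_{\lambda(\alpha)}$. $k$-conjugation: hook length of cell $(i,j)$ of $\kappa$ is $\kappa_i-j+\kappa'_j-i+1$; a $(k+1)$-core has no cell of hook length $k+1$; $p(\kappa)$ has $i$-th part the number of cells in row $i$ with hook length $\le k$; $p$ is a bijection from $(k+1)$-cores to $k$-bounded partitions with inverse $c$; $\lambda^{\omega_k}=p(c(\lambda)')$. For $k$-bounded partitions $\mu\subseteq\lambda$, $\lambda/\mu$ is a horizontal $k$-strip if no two of its cells share a column, and $\mu^{\omega_k}\subseteq\lambda^{\omega_k}$ with no two cells of $\lambda^{\omega_k}/\mu^{\omega_k}$ in the same row; its size is $|\lambda|-|\mu|$. The $k$-Schur functions $\{s^{(k)}_\lambda\}_{\lambda\ k\text{-bounded}}$ are the basis of $\mathsf{Sym}_{(k)}=\mathbb{Q}[h_1,\dots,h_k]$ with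 $s^{(k)}_\emptyset=1$ and $h_i s^{(k)}_\lambda=\sum_\mu s^{(k)}_\mu$ for $1\le i\le k$, summed over $k$-bounded $\mu$ with $\mu/\lambda$ a horizontal $k$-strip of size $i$. Box-adding operators: $t_1(\alpha)=[1,\alpha_1,\dots,\alpha_m]$; for $i\ge2$, $t_i(\alpha)$ replaces the leftmost part of $\alpha$ equal to $i-1$ by $i$ (undefined if none). $\beta//\alpha$ is a horizontal composition strip of size $n$ if $\beta=t_{i_n}\cdots t_{i_1}(\alpha)$ with $1\le i_1<\cdots<i_n$; for $k$-bounded $\alpha,\beta$ it is a horizontal $k$-composition strip if moreover $\lambda(\beta)/\lambda(\alpha)$ is a horizontal $k$-strip. $\{\mathbf{S}^{(k)}_\alpha\}$ is the unique basis of $\mathsf{NSym}_{(k)}$ with $\mathbf{S}^{(k)}_\emptyset=1$ and $H_i\mathbf{S}^{(k)}_\alpha=\sum_\beta\mathbf{S}^{(k)}_\beta$ ($1\le i\le k$) over $\beta$ with $\beta//\alpha$ a horizontal $k$-composition strip of size $i$. *)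

(* Defs.v *)
From mathcomp Require Import all_boot all_order all_algebra.
From mathcomp Require Import boolp.
Set Implicit Arguments. Unset Strict Implicit. Unset Printing Implicit Defensive.
Import GRing.Theory.
Local Open Scope ring_scope.

Definition is_comp (a : seq nat) : bool := all (fun x => 0 < x)%N a.
Definition kcomp (k : nat) (a : seq nat) : bool := all (fun x => (0 < x <= k)%N) a.
Definition is_partition (l : seq nat) : bool := sorted geq l && is_comp l.
Definition kpart (k : nat) (l : seq nat) : bool := is_partition l && kcomp k l.

Definition lam (a : seq nat) : seq nat := sort geq a.

(* All compositions of n (fuel f >= n) *)
Fixpoint compsF (f n : nat) : seq (seq nat) :=
  match f with
  | 0 => if n == 0%N then [:: [::]] else [::]
  | f'.+1 => if n == 0%N then [:: [::]]
             else flatten [seq map (cons j) (compsF f' (n - j)) | j <- iota 1 n]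
  end.
Definition comps (n : nat) : seq (seq nat) := undup (compsF n n).
Definition kcomps (k n : nat) : seq (seq nat) := [seq a <- comps n | kcomp k a].
Definition kparts (k n : nat) : seq (seq nat) := [seq a <- comps n | kpart k a].

Definition conj (kap : seq nat) : seq nat :=
  [seq count (fun r => j < r)%N kap | j <- iota 0 (head 0%N kap)].

Definition is_cell (kap : seq nat) (i j : nat) : bool := (j < nth 0%N kap i)%N.

(* hook length of cell (i,j) (0-indexed): arm + leg + 1
   = kap_i - j + kap'_j - i + 1 in the paper's 1-indexed convention *)
Definition hook (kap : seq nat) (i j : nat) : nat :=
  ((nth 0%N kap i - j.+1) + (nth 0%N (conj kap) j - i.+1)).+1.

Definition is_core (k : nat) (kap : seq nat) : Prop :=
  is_partition kap /\ forall i j, is_cell kap i j -> hook kap i j <> k.+1.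

Definition pcore_map (k : nat) (kap : seq nat) : seq nat :=
  [seq x <- [seq count (fun j => hook kap i j <= k)%N (iota 0 (nth 0%N kap i))
            | i <- iota 0 (size kap)] | (0 < x)%N].

(* kconj k l w  <->  w = l^{omega_k} = p(c(l)'), where c(l) is the
   (k+1)-core kap with p(kap) = l *)
Definition kconj (k : nat) (l w : seq nat) : Prop :=
  exists kap, is_core k kap /\ pcore_map k kap = l /\ w = pcore_map k (conj kap).

Definition subpart (m l : seq nat) : Prop :=
  forall i, (nth 0%N m i <= nth 0%N l i)%N.

Definition in_skew (l m : seq nat) (i j : nat) : bool :=
  (nth 0%N m i <= j < nth 0%N l i)%N.

Definition hkstrip (k : nat) (l m : seq nat) (n : nat) : Prop :=
  [/\ kpart k m /\ kpart k l, subpart m l,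
      (forall i i' j, (i < i')%N -> in_skew l m i j -> in_skew l m i' j -> False),
      (exists lw mw, [/\ kconj k l lw, kconj k m mw, subpart mw lw &
          forall i j j', (j < j')%N -> in_skew lw mw i j -> in_skew lw mw i j' -> False])
    & sumn l = (sumn m + n)%N].

(* t_i(alpha); None when undefined *)
Definition tbox (i : nat) (a : seq nat) : option (seq nat) :=
  if i == 0%N then None
  else if i == 1%N then Some (1%N :: a)
  else if i.-1 \in a then Some (set_nth 0%N a (index i.-1 a) i)
  else None.

(* t_{i_n} ... t_{i_1}(alpha) for s = [:: i_1; ...; i_n] *)
Definition tboxes (s : seq nat) (a : seq nat) : option (seq nat) :=
  foldl (fun oa i => obind (tbox i) oa) (Some a) s.

Definition hcstrip (b a : seq nat) (n : nat) : Prop :=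
  exists s : seq nat, [/\ size s = n, sorted ltn s, all (fun i => 0 < i)%N s
                        & tboxes s a = Some b].

Definition hkcstrip (k : nat) (b a : seq nat) (n : nat) : Prop :=
  [/\ kcomp k a, kcomp k b, hcstrip b a n & hkstrip k (lam b) (lam a) n].

(* An element F of NSym is encoded by its coefficients F gamma on the
   basis H_gamma = H_{gamma_1}...H_{gamma_m} (gamma a composition);
   an element f of Sym = Q[h_1,h_2,...] by its coefficients f mu on the
   basis h_mu (mu a partition). *)
Definition NSym := seq nat -> rat.
Definition Sym := seq nat -> rat.

Definition in_NSymk (k : nat) (F : NSym) : Prop :=
  exists L : seq (seq nat), forall g, F g != 0 -> (g \in L) && kcomp k g.
(* Sym_(k) = Q[h_1..h_k]: finite support contained in k-bounded partitions *)
Definition in_Symk (k : nat) (f : Sym) : Prop :=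
  exists L : seq (seq nat), forall m, f m != 0 -> (m \in L) && kpart k m.

Definition oneN : NSym := fun g => (g == [::])%:R.
Definition oneS : Sym := fun m => (m == [::])%:R.

(* left multiplication by H_i: H_i H_gamma = H_{i :: gamma} *)
Definition Hmul (i : nat) (F : NSym) : NSym :=
  fun g => match g with
           | j :: g' => if j == i then F g' else 0
           | [::] => 0
           end.
(* multiplication by h_i: h_i h_nu = h_{nu u {i}} *)
Definition hmul (i : nat) (f : Sym) : Sym :=
  fun m => if is_partition m && (i \in m) then f (rem i m) else 0.

(* chi : NSym -> Sym, H_alpha |-> h_{lambda(alpha)}, extended linearly *)
Definition chi (F : NSym) : Sym :=
  fun m => if is_partition m then \sum_(a <- permutations m) F a else 0.

Definition is_basis (X Y : eqType) (V : (X -> rat) -> Prop) (Q : pred Y)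
    (b : Y -> X -> rat) : Prop :=
  [/\ (forall y, Q y -> V (b y)),
      (forall f, V f -> exists L : seq (rat * Y),
          all Q (map snd L) /\ forall x, f x = \sum_(p <- L) p.1 * b p.2 x)
    & (forall (L : seq Y) (c : Y -> rat), uniq L -> all Q L ->
          (forall x, \sum_(y <- L) c y * b y x = 0) ->
          forall y, y \in L -> c y = 0)].

Definition kSchur_family (k : nat) (s : seq nat -> Sym) : Prop :=
  [/\ is_basis (in_Symk k) (kpart k) s,
      s [::] =1 oneS
    & forall l i, kpart k l -> (1 <= i <= k)%N ->
        hmul i (s l) =1
        (fun x => \sum_(m <- kparts k (sumn l + i) | `[< hkstrip k m l i >]) s m x)].

Definition kSchurN_family (k : nat) (S : seq nat -> NSym) : Prop :=
  [/\ is_basis (in_NSymk k) (kcomp k) S,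
      S [::] =1 oneN
    & forall a i, kcomp k a -> (1 <= i <= k)%N ->
        Hmul i (S a) =1
        (fun x => \sum_(b <- kcomps k (sumn a + i) | `[< hkcstrip k b a i >]) S b x)].

(* Main.v *)
Require Import Defs.
From mathcomp Require Import all_boot all_order all_algebra.
From mathcomp Require Import boolp.
From mathcomp Require Import zify.
Set Implicit Arguments. Unset Strict Implicit. Unset Printing Implicit Defensive.

Import GRing.Theory.

Lemma geq_total : total geq.
Proof. by move=> a b; rewrite /= leq_total. Qed.
Lemma geq_trans : transitive geq.
Proof. by move=> a b c /= h1 h2; apply: leq_trans h2 h1. Qed.
Lemma geq_anti : antisymmetric geq.
Proof. by move=> a b /= h; apply/eqP; rewrite eqn_leq andbC. Qed.

Lemma lam_perm a : perm_eq (lam a) a.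
Proof. by rewrite /lam perm_sort. Qed.

Lemma lam_sorted a : sorted geq (lam a).
Proof. exact: sort_sorted geq_total a. Qed.

Lemma sorted_lam x y : sorted geq x -> perm_eq x y -> x = lam y.
Proof.
move=> sx pxy; rewrite -(sorted_sort geq_trans sx) /lam.
by apply/(perm_sortP geq_total geq_trans geq_anti).
Qed.

Lemma lam_kpart k a : kcomp k a -> kpart k (lam a).
Proof.
move=> ka; rewrite /kpart /is_partition lam_sorted /= /is_comp /kcomp.
have p := lam_perm a.
rewrite !(perm_all _ p); rewrite /kcomp in ka; rewrite ka andbT.
by apply/allP=> x /(allP ka) /andP[].
Qed.

Lemma lam_part a : is_comp a -> is_partition (lam a).
Proof. by move=> ca; rewrite /is_partition lam_sorted /is_comp (perm_all _ (lam_perm a)). Qed.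

Lemma kcomp_comp k a : kcomp k a -> is_comp a.
Proof. by move=> ka; apply/allP=> x /(allP ka) /andP[]. Qed.

Lemma lam_sumn a : sumn (lam a) = sumn a.
Proof. exact: perm_sumn (lam_perm a). Qed.

Lemma compsF_complete a f : is_comp a -> (sumn a <= f)%N -> a \in compsF f (sumn a).
Proof.
elim: a f => [|x a IH] [|f] //=.
- by move=> /andP[x0 _]; rewrite leqn0 addn_eq0 eqn0Ngt x0.
move=> /andP[x0 ca] hf.
have -> : (x + sumn a == 0)%N = false by rewrite addn_eq0 eqn0Ngt x0.
rewrite -/(flatten _) -/(flatten _).
apply/flatten_mapP; exists x.
  by rewrite mem_iota x0 /= add1n ltnS leq_addr.
rewrite addKn; apply: map_f; apply: IH => //.
by lia.
Qed.

Lemma comps_complete a : is_comp a -> a \in comps (sumn a).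
Proof. by move=> ca; rewrite /comps mem_undup compsF_complete. Qed.

Lemma tbox_count j a b v : tbox j a = Some b -> (0 < v)%N ->
  (count_mem v b + (v.+1 == j) = count_mem v a + (v == j))%N.
Proof.
rewrite /tbox; case: eqP => // j0; case: eqP => [-> [<-] v0|j1].
  rewrite /= [1 == v]eq_sym; case: (v =P 1) => //=; lia.
case: ifP => // ja [<-] _.
rewrite count_set_nth_ltn ?index_mem // nth_index //=.
have : (0 < count_mem j.-1 a)%N by rewrite -has_count has_pred1.
have -> : (v.+1 == j) = (j.-1 == v) by apply/eqP/eqP; lia.
rewrite [j == v]eq_sym.
case: (j.-1 =P v) => [<-|]; case: (j.-1 =P j) => //=; try lia.
Qed.

Lemma tbox_pos j a b : all (fun x => 0 < x)%N a -> tbox j a = Some b -> all (fun x => 0 < x)%N b.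
Proof.
rewrite /tbox; case: eqP => // j0; case: eqP => [_ pa [<-] //|j1].
case: ifP => // ja pa [<-].
apply/allP => x /(nthP 0) [n]; rewrite size_set_nth nth_set_nth /=.
case: eqP => [_ _ <-|ne]; first lia.
move=> hn <-; case: (ltnP n (size a)) => h; first by apply: (allP pa); exact: mem_nth.
have : (index j.-1 a < size a)%N by rewrite index_mem.
move: hn; rewrite /maxn; case: ifP; lia.
Qed.

Lemma tboxes_rcons s j a : tboxes (rcons s j) a = obind (tbox j) (tboxes s a).
Proof. by rewrite /tboxes foldl_rcons. Qed.

Lemma tboxes_count s a b v : tboxes s a = Some b -> (0 < v)%N ->
  (count_mem v b + count_mem v.+1 s = count_mem v a + count_mem v s)%N.
Proof.
elim/last_ind: s b => [|s j IH] b.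
  by rewrite /tboxes /= => -[<-].
rewrite tboxes_rcons; case e: (tboxes s a) => [b'|] //= hb v0.
have := tbox_count hb v0; have := IH _ e v0.
rewrite -!cats1 !count_cat /= !addn0; lia.
Qed.

Lemma tboxes_pos s a b : all (fun x => 0 < x)%N a -> tboxes s a = Some b -> all (fun x => 0 < x)%N b.
Proof.
move=> pa; elim/last_ind: s b => [|s j IH] b.
  by rewrite /tboxes /= => -[<-].
rewrite tboxes_rcons; case e: (tboxes s a) => [b'|] //= hb.
exact: tbox_pos (IH _ e) hb.
Qed.

Lemma tboxes_exists s a : sorted ltn s -> all (fun x => 0 < x)%N s ->
  (forall c, c \in s -> (1 < c)%N -> (c.-1 \in a) || (c.-1 \in s)) ->
  exists b, tboxes s a = Some b.
Proof.
elim/last_ind: s => [|s j IH] ss ps hc.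
  by exists a.
have [ss' lt] : sorted ltn s /\ forall x, x \in s -> (x < j)%N.
  move: ss; rewrite (sorted_pairwise ltn_trans) -cats1 pairwise_cat /=.
  case/and3P=> ar ps' _; split; first by rewrite (sorted_pairwise ltn_trans).
  by move=> x xs; have := allP ar x xs; rewrite /= andbT.
have psj : all (fun x => 0 < x)%N s /\ (0 < j)%N by move: ps; rewrite all_rcons => /andP[].
case: psj => ps1 j0.
have [b' e] : exists b, tboxes s a = Some b.
  apply: IH => // c cs c1; have := hc c; rewrite mem_rcons in_cons cs orbT => /(_ isT c1).
  rewrite mem_rcons in_cons; have := lt c cs.
  by move=> cj; case: (c.-1 =P j) => [|_] /=; [lia|].


rewrite tboxes_rcons e /= /tbox.
case: (j =P 0) => [|_]; first lia.
case: (j =P 1) => [_|j1]; first by eauto.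
have -> : j.-1 \in b'; last by eauto.
have := tboxes_count e (_ : 0 < j.-1)%N.
have hj1 : (1 < j)%N by lia.
move=> /(_ ltac:(lia)); rewrite prednK //.
have -> : count_mem j s = 0%N.
  apply/eqP; rewrite -leqn0 leqNgt -has_count; apply/hasP => -[x xs /eqP ex].
  by have := lt x xs; lia.
have := hc j; rewrite mem_rcons mem_head => /(_ isT hj1).
rewrite mem_rcons in_cons; case: (j.-1 =P j) => [|_ /=]; first lia.
rewrite -!has_pred1 !has_count => h1 h2.
by rewrite addn0 in h2; rewrite h2 addn_gt0; case/orP: h1 => ->; rewrite ?orbT.
Qed.

Lemma perm_count_mem (s1 s2 : seq nat) :
  (forall x, count_mem x s1 = count_mem x s2) -> perm_eq s1 s2.
Proof.
elim: s1 s2 => [|x s1 IH] s2 h.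
  case: s2 h => // y s2 /(_ y) /=; rewrite eqxx; lia.
have xs2 : x \in s2.
  by rewrite -has_pred1 has_count -h /= eqxx.
apply: (@perm_trans _ (x :: rem x s2)); last by rewrite perm_sym (perm_to_rem xs2).
rewrite perm_cons; apply: IH => y.
have := h y; have := permP (perm_to_rem xs2) (pred1 y) => /= ->.
rewrite [x == y]eq_sym; lia.
Qed.

Definition col (v : nat) (l : seq nat) : nat := count (fun x => v <= x)%N l.

Lemma col_split v l : col v l = (count_mem v l + col v.+1 l)%N.
Proof.
elim: l => //= x l IH; rewrite IH /=.
case: (x =P v) => [->|ne] /=; rewrite ?leqnn ?ltnn; first lia.
rewrite leq_eqVlt; case: (v =P x) => [e|_] /=; first by case: ne.
lia.
Qed.

Lemma col_nth v l n : (0 < v)%N -> (size l <= n)%N ->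
  col v l = count (fun r => v <= nth 0 l r)%N (iota 0 n).
Proof.
move=> v0 hn; rewrite -(subnKC hn) iotaD count_cat.
have -> : count (fun r => v <= nth 0 l r)%N (iota (0 + size l) (n - size l)) = 0%N.
  apply/eqP; rewrite -leqn0 leqNgt -has_count; apply/hasP => -[r].
  rewrite mem_iota add0n => /andP[h _]; rewrite nth_default //; lia.
by rewrite addn0 /col -{1}(mkseq_nth 0 l) /mkseq count_map.
Qed.

Lemma count_le_split (T : Type) (a b : pred T) s :
  (count a s <= count b s + count (fun x => a x && ~~ b x) s)%N.
Proof. elim: s => //= x s IH; case: (a x); case: (b x) => /=; lia. Qed.

Lemma hkstrip_cols k l m n v : hkstrip k l m n -> (0 < v)%N ->
  (col v m <= col v l <= (col v m).+1)%N.
Proof.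
case=> _ sub hcol _ _ v0; set N := (size l + size m)%N.
rewrite (col_nth (l := m) v0 (_ : size m <= N)%N) ?leq_addl //.
rewrite (col_nth (l := l) v0 (_ : size l <= N)%N) ?leq_addr //.
apply/andP; split.
  apply: sub_count => r /= h; exact: leq_trans h (sub r).
apply: leq_trans (count_le_split _ (fun r => v <= nth 0 m r)%N _) _.
rewrite -addn1 leq_add2l.
set p := (fun x => _ && _).
rewrite -size_filter; case e : [seq r <- iota 0 N | p r] => [|x [|y t]] //=.
have: x \in [seq r <- iota 0 N | p r] by rewrite e mem_head.
have: y \in [seq r <- iota 0 N | p r] by rewrite e !inE eqxx orbT.
rewrite !mem_filter => /andP[py _] /andP[px _].
have := sorted_filter ltn_trans p (iota_ltn_sorted 0 N); rewrite e /= => /andP[xy _].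
case: (hcol x y v.-1 xy).
- move: px; rewrite /p /in_skew /= -ltnNge; lia.
- move: py; rewrite /p /in_skew /= -ltnNge; lia.
Qed.

Lemma sum_le_x k x : (x <= k)%N -> x = \sum_(v <- iota 1 k) (v <= x)%N.
Proof.
move=> hx; rewrite -(subnKC hx) iotaD big_cat /=.
rewrite (eq_big_seq (fun _ => 1%N)); last by move=> v; rewrite mem_iota => /andP[_]; lia.
rewrite [X in _ + X]big1_seq ?addn0; first by rewrite sum1_size size_iota.
by move=> v /andP[_]; rewrite mem_iota => /andP[h _]; apply/eqP; rewrite eqb0 -ltnNge; lia.
Qed.

Lemma sum_col k l : all (fun x => x <= k)%N l -> sumn l = \sum_(v <- iota 1 k) col v l.
Proof.
elim: l => [_|x l IH /= /andP[hx hl]].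
  by rewrite big1_seq.
rewrite /col /= big_split /= -IH // -sum_le_x //.
Qed.

Lemma hkstrip_kpart k l m n : hkstrip k l m n -> kpart k m /\ kpart k l.
Proof. by case. Qed.

Lemma hkstrip_sum k l m n : hkstrip k l m n -> sumn l = (sumn m + n)%N.
Proof. by case. Qed.

Lemma kpart_le k l : kpart k l -> all (fun x => x <= k)%N l.
Proof. by case/andP=> _ h; apply/allP => x /(allP h) /andP[]. Qed.

Lemma col_big k l v : all (fun x => x <= k)%N l -> (k < v)%N -> col v l = 0%N.
Proof.
move=> h kv; apply/eqP; rewrite -leqn0 leqNgt -has_count; apply/hasP => -[x /(allP h) /= xk].
lia.
Qed.

Lemma strip_surj k a i mu : kcomp k a -> hkstrip k mu (lam a) i ->
  exists b, hcstrip b a i /\ lam b = mu.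
Proof.
move=> ka hs.
have [kpla kpmu] := hkstrip_kpart hs.
have hb := hkstrip_cols hs.
set s := [seq v <- iota 1 k | col v (lam a) < col v mu]%N.
have ss : sorted ltn s by apply: sorted_filter; [exact: ltn_trans|exact: iota_ltn_sorted].
have us : uniq s by apply: sorted_uniq ss; [exact: ltn_trans|exact: ltnn].
have ps : all (fun x => 0 < x)%N s.
  by apply/allP => x; rewrite mem_filter mem_iota => /and3P[_ h _].
have mems : forall v, (0 < v)%N -> ((v \in s) : nat) = (col v mu - col v (lam a))%N.
  move=> v v0; rewrite mem_filter mem_iota; have := hb v v0.
  case: (leqP v k) => vk.
    by rewrite v0 add1n ltnS vk andbT; case: ltnP => /=; lia.
  rewrite (col_big (kpart_le kpmu) vk) (col_big (kpart_le kpla) vk) add1n ltnS. by [].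
have cnt : forall v, (0 < v)%N -> count_mem v (lam a) = (col v (lam a) - col v.+1 (lam a))%N.
  by move=> v _; rewrite (col_split v (lam a)); lia.
have cntm : forall v, (0 < v)%N -> count_mem v mu = (col v mu - col v.+1 mu)%N.
  by move=> v _; rewrite (col_split v mu); lia.
have [b eb] : exists b, tboxes s a = Some b.
  apply: tboxes_exists => // c cs c1.
  apply/orP; case: (boolP (c.-1 \in s)) => [h|ncs]; [by right|left].
  have c0 : (0 < c)%N by lia.
  have := mems c c0; have := mems c.-1 ltac:(lia); rewrite cs (negbTE ncs) /=.
  have := hb c.-1 ltac:(lia); have := col_split c.-1 (lam a); have := col_split c.-1 mu.
  rewrite prednK // => e1 e2 _ h1 h2.
  have : (0 < count_mem c.-1 (lam a))%N.
    have := col_split c mu; have := col_split c (lam a); lia.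
  by rewrite -has_count has_pred1 (perm_mem (lam_perm a)) => ->.
have pa : all (fun x => 0 < x)%N a by apply/allP => x /(allP ka) /andP[].
have pb := tboxes_pos pa eb.
have pmu : all (fun x => 0 < x)%N mu by case/andP: kpmu => /andP[].
have pm : perm_eq mu b.
  apply: perm_count_mem => x; case: (posnP x) => [->|x0].
    have h0 : forall l, all (fun x => 0 < x)%N l -> count_mem 0 l = 0%N.
      move=> l hl; apply/eqP; rewrite -leqn0 leqNgt -has_count has_pred1.
      by apply/negP => /(allP hl).
    by rewrite !h0.
  have := tboxes_count eb x0; rewrite !(count_uniq_mem _ us) (mems _ x0) (mems x.+1 isT).
  rewrite -(permP (lam_perm a)) (cnt x x0) (cntm x x0).
  have := hb x x0; have := hb x.+1 isT; have := col_split x (lam a); have := col_split x mu.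
  lia.
exists b; split; last by apply/esym/sorted_lam => //; case/andP: kpmu => /andP[].
exists s; split => //.
have hsum := hkstrip_sum hs.
rewrite (sum_col (kpart_le kpmu)) (sum_col (kpart_le kpla)) in hsum.
rewrite size_filter -sumn_count sumnE big_map.
have : \sum_(v <- iota 1 k) col v mu =
       \sum_(v <- iota 1 k) col v (lam a) + \sum_(v <- iota 1 k) (col v (lam a) < col v mu)%N.
  rewrite -big_split /=; apply: eq_big_seq => v; rewrite mem_iota => /andP[v0 _].
  have := hb v v0; case: ltnP => /=; lia.
lia.
Qed.

Lemma count_big (s : seq nat) v : (sumn s < v)%N -> count_mem v s = 0%N.
Proof. elim: s => //= x s IH h; rewrite IH; last lia. by case: eqP => //=; lia. Qed.

Lemma strip_inj a b1 b2 n1 n2 : hcstrip b1 a n1 -> hcstrip b2 a n2 -> perm_eq b1 b2 -> b1 = b2.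
Proof.
case=> s1 [_ ss1 ps1 e1] [s2 [_ ss2 ps2 e2]] pb.
have us1 : uniq s1 by apply: sorted_uniq ss1; [exact: ltn_trans|exact: ltnn].
have us2 : uniq s2 by apply: sorted_uniq ss2; [exact: ltn_trans|exact: ltnn].
have rel : forall v, (0 < v)%N ->
    (count_mem v s1 + count_mem v.+1 s2 = count_mem v s2 + count_mem v.+1 s1)%N.
  move=> v v0; have := tboxes_count e1 v0; have := tboxes_count e2 v0.
  rewrite -(permP pb); lia.
set N := (sumn s1 + sumn s2).+1.
have key : forall d v, (0 < v)%N -> (N <= v + d)%N -> count_mem v s1 = count_mem v s2.
  elim=> [|d IH] v v0 hv.
    by rewrite !count_big //; lia.
  have := IH v.+1 isT ltac:(lia); have := rel v v0; lia.
have eqs : s1 = s2.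
  apply: (irr_sorted_eq ltn_trans ltnn) => // v.
  case: (posnP v) => [->|v0].
    apply/idP/idP => h; [have := allP ps1 _ h | have := allP ps2 _ h] => //.
  by rewrite -!has_pred1 !has_count (key N v v0) //; lia.
by move: e1 e2; rewrite eqs => -> [].
Qed.

Import GRing.Theory.

Definition strips k b i := [seq c <- kcomps k (sumn b + i) | `[< hkcstrip k c b i >]].

Lemma kpart_kcomp k l : kpart k l -> kcomp k l.
Proof. by case/andP. Qed.

Lemma kpart_comp k l : kpart k l -> is_comp l.
Proof. by case/andP => /andP[]. Qed.

Lemma strips_bij k a i (F : seq nat -> rat) : kcomp k a ->
  (\sum_(c <- strips k a i) F (lam c) =
   \sum_(mu <- kparts k (sumn (lam a) + i) | `[< hkstrip k mu (lam a) i >]) F mu)%R.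
Proof.
move=> ka; rewrite -(big_map lam predT F) -[RHS]big_filter.
apply: perm_big; apply: uniq_perm.
- rewrite map_inj_in_uniq; first by rewrite filter_uniq // filter_uniq // undup_uniq.
  move=> c1 c2; rewrite !mem_filter => /andP[/asboolP [_ _ h1 _] _] /andP[/asboolP [_ _ h2 _] _] e.
  apply: strip_inj h1 h2 _.
  apply: perm_trans (_ : perm_eq (lam c1) c2); first by rewrite perm_sym lam_perm.
  by rewrite e lam_perm.
- by rewrite filter_uniq // filter_uniq // undup_uniq.
move=> mu; apply/mapP/idP.
- case=> c; rewrite mem_filter => /andP[/asboolP [_ _ _ hs] _] ->.
  rewrite mem_filter; apply/andP; split; first by apply/asboolP.
  have [_ kp] := hkstrip_kpart hs.
  rewrite mem_filter kp /= -(hkstrip_sum hs); exact: comps_complete (kpart_comp kp).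
rewrite mem_filter => /andP[/asboolP hs _].
have [b [hb eb]] := strip_surj ka hs.
exists b => //.
have [_ kp] := hkstrip_kpart hs.
have kb : kcomp k b.
  by rewrite /kcomp -(perm_all _ (lam_perm b)) eb; exact: kpart_kcomp kp.
rewrite mem_filter; apply/andP; split.
  apply/asboolP; split => //; by rewrite eb.
rewrite mem_filter kb /=.
have -> : (sumn a + i = sumn b)%N by rewrite -(lam_sumn b) eb (hkstrip_sum hs) lam_sumn.
exact: comps_complete (kcomp_comp kb).
Qed.

Import GRing.Theory.
Local Open Scope ring_scope.

Definition kexpn k (g : seq nat) : seq (rat * seq nat) :=
  foldr (fun i E => flatten [seq [seq (p.1, c) | c <- strips k p.2 i] | p <- E])
    [:: (1, [::])] g.

Lemma sum_kexpn_cons k i g (h : rat * seq nat -> rat) :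
  \sum_(q <- kexpn k (i :: g)) h q =
  \sum_(p <- kexpn k g) \sum_(c <- strips k p.2 i) h (p.1, c).
Proof. by rewrite /= big_flatten /= big_map; apply: eq_bigr => p _; rewrite big_map. Qed.

Lemma kexpn_kcomp k g : all (fun q => kcomp k q.2) (kexpn k g).
Proof.
elim: g => [|i g IH] //=; apply/allP => q /flatten_mapP [p _] /mapP [c].
by rewrite mem_filter => /andP[_]; rewrite mem_filter => /andP[kc _] ->.
Qed.

Lemma expA k S : kSchurN_family k S -> forall g, kcomp k g ->
  forall x, \sum_(q <- kexpn k g) q.1 * S q.2 x = (x == g)%:R.
Proof.
case=> _ S0 SP; elim=> [_ x|i g IH /= /andP[/andP[i0 ik] kg] x].
  by rewrite big_seq1 S0 /oneN mul1r.
rewrite sum_kexpn_cons.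
transitivity (\sum_(p <- kexpn k g) p.1 * Hmul i (S p.2) x).
  rewrite big_seq_cond [RHS]big_seq_cond; apply: eq_bigr => p /andP[pin _].
  rewrite -mulr_sumr; congr (_ * _).
  have kp : kcomp k p.2 by have := allP (kexpn_kcomp k g) p pin.
  by rewrite (SP _ _ kp); [rewrite /strips big_filter | rewrite i0 ik].
case: x => [|j x] /=.
  by rewrite big1 // => p _; rewrite mulr0.
case: (j =P i) => [->|ne].
  by rewrite IH // eqseq_cons eqxx.
rewrite big1 => [|p _]; last by rewrite mulr0.
by rewrite eqseq_cons; case: eqP.
Qed.

Lemma rem_lam k i g m : kcomp k (i :: g) -> is_partition m ->
  (i \in m) && (rem i m == lam g) = (m == lam (i :: g)).
Proof.
move=> kg /andP[sm cm]; apply/andP/eqP.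
  case=> im /eqP er; apply: sorted_lam => //.
  apply: perm_trans (perm_to_rem im) _; rewrite perm_cons er; exact: lam_perm.
move=> em; have im : i \in m by rewrite em (perm_mem (lam_perm _)) mem_head.
split=> //; apply/eqP/sorted_lam.
  exact: (subseq_sorted geq_trans (rem_subseq i m) sm).
rewrite -(perm_cons i); apply: (@perm_trans _ m); first by rewrite perm_sym perm_to_rem.
by rewrite em lam_perm.
Qed.

Lemma expB k s : kSchur_family k s -> forall g, kcomp k g ->
  forall m, \sum_(q <- kexpn k g) q.1 * s (lam q.2) m = (m == lam g)%:R.
Proof.
case=> _ s0 sP; elim=> [_ m|i g IH kig m].
  by rewrite big_seq1 s0 /oneS mul1r.
have /andP[/andP[i0 ik] kg] := kig.
rewrite sum_kexpn_cons.
transitivity (\sum_(p <- kexpn k g) p.1 * hmul i (s (lam p.2)) m).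
  rewrite big_seq_cond [RHS]big_seq_cond; apply: eq_bigr => p /andP[pin _].
  rewrite -mulr_sumr; congr (_ * _).
  have kp : kcomp k p.2 by have := allP (kexpn_kcomp k g) p pin.
  rewrite (sP _ _ (lam_kpart kp)); last by rewrite i0 ik.
  by rewrite (@strips_bij k p.2 i (fun mu => s mu m) kp).
rewrite /hmul; case e: (is_partition m && (i \in m)); move: e.
  by case/andP=> pm im; rewrite (IH kg) -(rem_lam kig pm) im.
move=> np.
rewrite big1 => [|p _]; last by rewrite mulr0.
case: eqP => // em; move: np; rewrite em (perm_mem (lam_perm _)) mem_head andbT.
by rewrite lam_part // (kcomp_comp kig).
Qed.

Import GRing.Theory.
Local Open Scope ring_scope.

Lemma sum_pick (T : eqType) (G : seq T) (f : T -> rat) z : uniq G ->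
  \sum_(g <- G) (z == g)%:R * f g = (z \in G)%:R * f z.
Proof.
elim: G => [|y G IH] /=; first by rewrite big_nil mul0r.
case/andP=> yG uG; rewrite big_cons IH // in_cons.
case: (z =P y) => [->|_] /=; last by rewrite mul0r add0r.
by rewrite (negbTE yG) !mul1r mul0r addr0.
Qed.

Lemma regroup (T : eqType) (E : seq (rat * T)) (U : seq T) (h : T -> rat) :
  uniq U -> all (fun q => q.2 \in U) E ->
  \sum_(q <- E) q.1 * h q.2 = \sum_(y <- U) (\sum_(q <- E | q.2 == y) q.1) * h y.
Proof.
move=> uU; elim: E => [_|q E IH /= /andP[qU aE]].
  by rewrite big_nil big1 // => y _; rewrite big_nil mul0r.
rewrite big_cons IH //.
transitivity (\sum_(y <- U) ((q.2 == y)%:R * (q.1 * h y) +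
                            (\sum_(q0 <- E | q0.2 == y) q0.1) * h y)).
  rewrite big_split /= sum_pick // qU mul1r //.
by apply: eq_bigr => y _; rewrite big_cons; case: eqP => _ /=;
  rewrite ?mul1r ?mul0r ?add0r // mulrDl.
Qed.

Lemma perm_part_lam m g : is_partition m -> perm_eq g m = (m == lam g).
Proof.
case/andP=> sm _; apply/idP/eqP => [p|->]; last by rewrite perm_sym lam_perm.
by apply: sorted_lam => //; rewrite perm_sym.
Qed.

Theorem mainTheorem7 (k : nat) (s : seq nat -> Sym) (S : seq nat -> NSym) :
  (1 <= k)%N ->
  kSchur_family k s ->
  kSchurN_family k S ->
  forall alpha : seq nat, kcomp k alpha ->
    chi (S alpha) =1 s (lam alpha).
Proof.
move=> _ sF SF a ka m.
have SF' := SF; case: SF' => [[inV _ indep] _ _].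
have [L0 hL0] := inV a ka.
set G := undup [seq g <- L0 | kcomp k g].
have uG : uniq G by exact: undup_uniq.
have kG : forall g, g \in G -> kcomp k g by move=> g; rewrite mem_undup mem_filter => /andP[].
have supp : forall g, S a g != 0 -> g \in G.
  by move=> g /hL0 /andP[h1 h2]; rewrite mem_undup mem_filter h1 h2.
have step1 : forall x, S a x = \sum_(g <- G) (x == g)%:R * S a g.
  move=> x; rewrite sum_pick //; case: (boolP (x \in G)) => [_|nx]; first by rewrite mul1r.
  by rewrite mul0r; apply/eqP; apply: contraNT nx => /supp.
set E := flatten [seq [seq (S a g * q.1, q.2) | q <- kexpn k g] | g <- G].
have sumE : forall h : seq nat -> rat,
    \sum_(q <- E) q.1 * h q.2 = \sum_(g <- G) S a g * \sum_(q <- kexpn k g) q.1 * h q.2.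
  move=> h; rewrite big_flatten /= big_map; apply: eq_bigr => g _.
  by rewrite big_map mulr_sumr; apply: eq_bigr => q _; rewrite mulrA.
have step2 : forall x, \sum_(q <- E) q.1 * S q.2 x = S a x.
  move=> x; rewrite (sumE (fun y => S y x)) step1; rewrite big_seq [RHS]big_seq; apply: eq_bigr => g gG.
  by rewrite (expA SF (kG g gG)) mulrC.
have step2' : forall m, \sum_(q <- E) q.1 * s (lam q.2) m =
                        \sum_(g <- G) (m == lam g)%:R * S a g.
  move=> m'; rewrite (sumE (fun y => s (lam y) m')) big_seq [RHS]big_seq; apply: eq_bigr => g gG.
  by rewrite (expB sF (kG g gG)) mulrC.
set U := undup (a :: map snd E).
have uU : uniq U by exact: undup_uniq.
have aE : all (fun q => q.2 \in U) E.
  by apply/allP => q qE; rewrite mem_undup in_cons map_f ?orbT.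
have kE : forall q, q \in E -> kcomp k q.2.
  move=> q /flatten_mapP [g gG] /mapP [q' q'e ->] /=.
  exact: (allP (kexpn_kcomp k g) q' q'e).
have aU : a \in U by rewrite mem_undup mem_head.
have coef : forall y, y \in U -> \sum_(q <- E | q.2 == y) q.1 = (y == a)%:R.
  move=> y yU; apply/eqP; rewrite -subr_eq0; apply/eqP; move: y yU.
  apply: (indep U (fun y => \sum_(q <- E | q.2 == y) q.1 - (y == a)%:R)) => //.
    apply/allP => y; rewrite mem_undup in_cons => /orP[/eqP->//|/mapP[q qE ->]].
    exact: kE.
  move=> x; rewrite (eq_bigr (fun y => (\sum_(q <- E | q.2 == y) q.1) * S y x
                                       - (a == y)%:R * S y x)); last first.
    by move=> y _; rewrite mulrBl eq_sym.
  by rewrite sumrB -regroup // step2 sum_pick // aU mul1r subrr.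
have step4 : s (lam a) m = \sum_(g <- G) (m == lam g)%:R * S a g.
  rewrite -step2' (regroup (fun y => s (lam y) m) uU aE).
  rewrite big_seq (eq_bigr (fun y => (a == y)%:R * s (lam y) m)).
    by rewrite -big_seq sum_pick // aU mul1r.
  by move=> y yU; rewrite coef // eq_sym.
rewrite step4 /chi; case: ifP => pm.
  rewrite (eq_bigr _ (fun a' _ => step1 a')) exchange_big /=.
  rewrite big_seq [RHS]big_seq; apply: eq_bigr => g gG.
  rewrite -mulr_suml.
  have hp : \sum_(i <- permutations m) (i == g)%:R = (m == lam g)%:R :> rat.
    rewrite -(perm_part_lam _ pm) -mem_permutations -[RHS]mulr1.
    rewrite -(sum_pick (fun _ => 1) _ (permutations_uniq m)).
    by apply: eq_bigr => i _; rewrite eq_sym mulr1.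
  by rewrite hp.
rewrite big1_seq // => g /andP[_ gG].
case: eqP => [em|]; last by rewrite mul0r.
by move: pm; rewrite em lam_part // (kcomp_comp (kG g gG)).
Qed.
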